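(* Let $p\in(0,1)$, $N=1/(1-p)$, $r\ge0$ an integer and $n\ge0$ even. If $G=(U,w,w')$ is a melonic graph of order $n$, then $$\mathcal A_r(G)\le 4^{n}\,p^{r/2}.$$
   Context: Trees. A 2-rooted ternary tree of order $n$ is a finite plane tree $U$ with a root vertex of degree 2 and $n$ true vertices of degree 4; each edge is internal or a leaf (half-edge). Each true vertex $v$ has parent edge $e_1(v)$ (towards the root) and ordered children edges $e_2(v),e_3(v),e_4(v)$. One root edge has type $\alpha$, the other $\bar\alpha$; if $e_1(v)$ has type $\tau$ then $e_2(v)$ has the other type and $e_3(v),e_4(v)$ have type $\tau$. Leaves of type $\alpha$ are leaves, of type $\bar\alpha$ anti-leaves ($n+1$ each). A heap-ordering labels true vertices bijectively by $\{1,\dots,n\}$, increasing from parent to child. Graphs. For even $n$, a graph of order $n$ is $G=(U,w,w')$: $U$ heap-ordered; $w$ a bijection leaves $\to$ anti-leaves (dashed edges; internal edges are solid); $w'$ a partition of true vertices into $n/2$ pairs (wavy edges) with, for each pair $\{v,v'\}$ ($v$ of smaller label), one of eight propagators in $(S,j,k)=(S_v,j_v,k_v)$, $(S',j',k')=(S_{v'},j_{v'},k_{v'})$: $\delta_{jj'}\delta_{kk'}$, $\delta_{j,S-j'}\delta_{kk'}$, $\delta_{jj'}\delta_{k,S-k'}$, $\delta_{j,S-j'}\delta_{k,S-k'}$, $\delta_{jk'}\delta_{kj'}$, $\delta_{j,S-k'}\delta_{kj'}$, $\delta_{jk'}\delta_{k,S-j'}$, $\delta_{j,S-k'}\delta_{k,S-j'}$,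 together with $S=S'$. Amplitude. A momentum attribution gives each true vertex $S_v\ge0$, $0\le j_v,k_v\le S_v$ and momenta $j_v,S_v-j_v,k_v,S_v-k_v$ to the ends at $v$ of $e_1,\dots,e_4$. It is admissible (for root momentum $r$) if solid edges get equal momenta at both ends, both root edges carry momentum $r$, every dashed edge $e$ joins leaves of equal momentum $m(e)$, and every wavy edge satisfies $S_v=S_{v'}$ and its propagator. $\mathcal A_r(G):=N^{-n}\sum_{\text{admissible}}\prod_{e\text{ dashed}}p^{m(e)}$. Melonic graphs. Each propagator (with $S=S'$) induces a bijection from the edge-ends at $v$ to those at $v'$ (matching identified momenta). For two true vertices joined by three edges, the leading propagator is the one whose bijection maps the $v$-end of each joining edge to its $v'$-end. The trivial graph ($n=0$) is the root with a leaf and an anti-leaf joined by a dashed edge. A graph is melonic if (ignoring heap-orderings) it arises from the trivial graph by repeatedly inserting two new true vertices $v,v'$, joined to each other by three edges and by a wavy edge carrying the leading propagator, in one of these ways: (I) into a dashed edge $\{x,y\}$: $e_1(v)$ at $x$, $e_1(v')$ at $y$, dashed edges $e_2(v)$–$e_2(v')$ and $\{e_3(v),e_4(v)\}$ bijectively to $\{e_3(v'),e_4(v')\}$; (II) into a dashed edge $\{z,z'\}$: $e_1(v)$ at $z$, $e_1(v')=e_2(v)$, dashed edges $e_2(v')$–$z'$ and $\{e_3(v),e_4(v)\}$ bijectively to $\{e_3(v'),e_4(v')\}$; (III) into a dashed edge $\{z,z'\}$: $e_1(v)$ at $z$, $e_1(v')=e_a(v)$ ($a\in\{3,4\}$, $b$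 the other), dashed edges $e_2(v)$–(one of $e_3(v'),e_4(v')$), $e_b(v)$–$e_2(v')$, remaining child leaf of $v'$–$z'$; (IIs) into a solid edge from $u$ to child $z$: $v$ below $u$, $e_1(v')=e_2(v)$, $e_1(z)=e_2(v')$, dashed edges $\{e_3(v),e_4(v)\}$ bijectively to $\{e_3(v'),e_4(v')\}$; (IIIs) as (IIs) but $e_1(v')=e_a(v)$, $a\in\{3,4\}$, $e_1(z)=e_c(v')$, $c\in\{3,4\}$, dashed edges $e_2(v)$–(other of $e_3(v'),e_4(v')$) and $e_b(v)$–$e_2(v')$. *)

(* Defs.v *)
From HB Require Import structures.
From mathcomp Require Import all_boot all_order all_algebra.
From mathcomp Require Import all_classical all_reals all_analysis.

Set Implicit Arguments.
Unset Strict Implicit.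
Unset Printing Implicit Defensive.

Import Order.TTheory GRing.Theory Num.Theory.

(* A slot is the position of an edge seen from
   the vertex closer to the root:
     inl b      : a root edge; b = true is the root edge of type alpha,
                  b = false the root edge of type alpha-bar;
     inr (u, c) : the child edge e_{c+2}(u) of the true vertex u
                  (c = 0 : e_2, c = 1 : e_3, c = 2 : e_4).
   Every slot is either occupied by the parent edge e_1 of exactly one true
   vertex (internal / solid edge), or free (a leaf half-edge).              *)
Definition slot (V : finType) : finType := (bool + V * 'I_3)%type.

Inductive prop8 := P1 | P2 | P3 | P4 | P5 | P6 | P7 | P8.

(* Propagator constraint between (S,j,k) (the unprimed vertex) and
   (S',j',k') (the primed vertex), including S = S'. *)
Definition prop_holds (P : prop8) (a b : nat * nat * nat) : Prop :=
  let: (s0, j, k) := a in let: (s1, j', k') := b in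
  s0 = s1 /\
  match P with
  | P1 => j = j' /\ k = k'
  | P2 => j = s0 - j' /\ k = k'
  | P3 => j = j' /\ k = s0 - k'
  | P4 => j = s0 - j' /\ k = s0 - k'
  | P5 => j = k' /\ k = j'
  | P6 => j = s0 - k' /\ k = j'
  | P7 => j = k' /\ k = s0 - j'
  | P8 => j = s0 - k' /\ k = s0 - j'
  end.

(* The same propagator read with the roles of the two vertices exchanged. *)
Definition swapP (P : prop8) : prop8 :=
  match P with P6 => P7 | P7 => P6 | Q => Q end.

(* Bijection induced by a propagator from edge-ends at v (1..4 for
   e_1..e_4, carrying momenta j, S-j, k, S-k) to edge-ends at v'. *)
Definition bij (P : prop8) (e : nat) : nat :=
  match P, e with
  | P1, _ => e
  | P2, 1 => 2 | P2, 2 => 1 | P2, _ => e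
  | P3, 3 => 4 | P3, 4 => 3 | P3, _ => e
  | P4, 1 => 2 | P4, 2 => 1 | P4, 3 => 4 | P4, _ => 3
  | P5, 1 => 3 | P5, 2 => 4 | P5, 3 => 1 | P5, _ => 2
  | P6, 1 => 4 | P6, 2 => 3 | P6, 3 => 1 | P6, _ => 2
  | P7, 1 => 3 | P7, 2 => 4 | P7, 3 => 2 | P7, _ => 1
  | P8, 1 => 4 | P8, 2 => 3 | P8, 3 => 2 | P8, _ => 1
  end.

(* P is the leading propagator for the joining edges [joins], each given as
   (end index at v, end index at v'). *)
Definition leading (P : prop8) (joins : seq (nat * nat)) : Prop :=
  forall a b, (a, b) \in joins -> bij P a = b.

(* Graph data on a finite set V of true vertices.
   par v  : the slot occupied by the parent edge e_1(v);
   ty v   : the type of v, i.e. of e_1(v) (true = alpha);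
   dash   : the dashed edges, as a matching of free slots (meaningful on
            free slots only): dash s is the other end of the dashed edge at s;
   wav v  : the partner of v for the wavy edges;
   prop v : the propagator on the wavy edge {v, wav v}, read with v as the
            unprimed vertex (S,j,k) and wav v as the primed one.           *)
Record gdata (V : finType) := GData {
  par : V -> slot V;
  ty : V -> bool;
  dash : slot V -> slot V;
  wav : V -> V;
  prop : V -> prop8 }.

Section Basics.
Variable V : finType.
Implicit Types (G : gdata V) (s : slot V) (v : V).

Definition slot_ty G s : bool :=
  match s with
  | inl b => b
  | inr (u, c) => if val c == 0%N then ~~ ty G u else ty G u
  end.

Definition free G s : bool := [forall v, par G v != s].
Definition is_leaf G s : bool := free G s && slot_ty G s.
Definition is_antileaf G s : bool := free G s && ~~ slot_ty G s.

(* G is a graph: the parent relation defines a plane tree (injective parent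
   slots, no cycles), types follow the typing rule, dashed edges form a
   bijection leaves -> anti-leaves (stored as a matching of free slots with
   opposite types), wavy edges form a perfect matching of true vertices and
   the propagator of a wavy edge is well defined (independent of which end
   is read as unprimed). *)
Definition wf G : Prop :=
  [/\ injective (par G),
      exists rank : V -> nat, forall v u c, par G v = inr (u, c) -> rank u < rank v,
      (forall v, ty G v = slot_ty G (par G v)),
      (forall s, free G s ->
         [/\ free G (dash G s), slot_ty G (dash G s) = ~~ slot_ty G s
           & dash G (dash G s) = s])
    & (forall v, [/\ wav G (wav G v) = v, wav G v != v
                   & prop G (wav G v) = swapP (prop G v)])].

Definition att := {ffun V -> nat * nat * nat}.
Definition mS (x : att) v := (x v).1.1.
Definition mj (x : att) v := (x v).1.2.
Definition mk (x : att) v := (x v).2.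

(* momentum at the end at v of e_e(v), e = 1..4 *)
Definition mom_end (x : att) v (e : nat) : nat :=
  match e with
  | 1 => mj x v
  | 2 => mS x v - mj x v
  | 3 => mk x v
  | _ => mS x v - mk x v
  end.

Definition slot_mom (r : nat) (x : att) s : nat :=
  match s with
  | inl _ => r
  | inr (u, c) => mom_end x u (val c + 2)
  end.

Definition admissible G (r : nat) (x : att) : Prop :=
  [/\ (forall v, mj x v <= mS x v /\ mk x v <= mS x v),
      (forall v, mom_end x v 1 = slot_mom r x (par G v)),
      (forall s, is_leaf G s -> slot_mom r x s = slot_mom r x (dash G s))
    & (forall v, prop_holds (prop G v) (x v) (x (wav G v)))].

End Basics.

Local Open Scope ring_scope.

(* product over dashed edges (each indexed by its leaf end) of p^{m(e)} *)
Definition weight (R : realType) (p : R) (V : finType) (G : gdata V)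
    (r : nat) (x : att V) : R :=
  \prod_(s : slot V | is_leaf G s) p ^+ slot_mom r x s.

Definition amplitude (R : realType) (p : R) (V : finType) (G : gdata V)
    (r : nat) : \bar R :=
  (((1 - p)^-1) ^- #|V|)%:E *
  (\esum_(x in [set x : att V | admissible G r x]) (weight p G r x)%:E)%E.

Local Close Scope ring_scope.

Definition heap (n : nat) (G : gdata 'I_n) : Prop :=
  forall (v u : 'I_n) (c : 'I_3), par G v = inr (u, c) -> (u < v)%N.

(* Melonic graphs.  Insertions produce a graph on V + bool, where
   inr false is the new vertex v and inr true the new vertex v'.           *)
Section Insertion.
Variable V : finType.
Implicit Types (G : gdata V).

Definition nv : V + bool := inr false.
Definition nv' : V + bool := inr true.

Definition liftS (s : slot V) : slot (V + bool)%type :=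
  match s with inl b => inl b | inr (u, c) => inr (inl u, c) end.

Definition ch (x : V + bool) (i : nat) : slot (V + bool)%type := inr (x, inord i).

Fixpoint pair_lookup (ps : seq (slot (V + bool)%type * slot (V + bool)%type))
    (s : slot (V + bool)%type) : option (slot (V + bool)%type) :=
  match ps with
  | [::] => None
  | (a, b) :: ps' =>
      if s == a then Some b else if s == b then Some a else pair_lookup ps' s
  end.

(* generic insertion: new vertices v, v' with parent slots pv, pv' and types
   tv, tv'; optionally old vertex z gets the new parent slot sz; the new
   dashed edges are [pairs] (overriding old ones); other old dashed edges are
   kept; the new wavy edge {v, v'} carries P (read from v). *)
Definition mkIns G (pv pv' : slot (V + bool)%type) (tv tv' : bool)
    (oz : option (V * slot (V + bool)%type))
    (pairs : seq (slot (V + bool)%type * slot (V + bool)%type)) (P : prop8)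
    : gdata (V + bool)%type :=
  {| par := fun y => match y with
        | inl u => match oz with
                   | Some (z, sz) => if u == z then sz else liftS (par G u)
                   | None => liftS (par G u)
                   end
        | inr false => pv
        | inr true => pv'
        end;
     ty := fun y => match y with
        | inl u => ty G u | inr false => tv | inr true => tv' end;
     dash := fun s => match pair_lookup pairs s with
        | Some t => t
        | None => match s with
                  | inl b => liftS (dash G (inl b))
                  | inr (inl u, c) => liftS (dash G (inr (u, c)))
                  | inr (inr _, _) => s
                  end
        end;
     wav := fun y => match y with
        | inl u => inl (wav G u) | inr false => nv' | inr true => nv end;
     prop := fun y => match y with
        | inl u => prop G u | inr false => P | inr true => swapP P end |}.

(* sigma : bijection {e3(v),e4(v)} -> {e3(v'),e4(v')} (child index 1,2);
   sw = true means e3 -> e4, e4 -> e3 *)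
Definition sig (sw : bool) (c : nat) : nat := if sw then 3 - c else c.

(* the two ends of the dashed edge at the free slot l; o chooses which
   end plays the role of x (resp. z) *)
Definition end1 G (l : slot V) (o : bool) := if o then l else dash G l.
Definition end2 G (l : slot V) (o : bool) := if o then dash G l else l.

Definition insI G l o sw P :=
  let x := end1 G l o in let y := end2 G l o in
  mkIns G (liftS x) (liftS y) (slot_ty G x) (slot_ty G y) None
    [:: (ch nv 0, ch nv' 0); (ch nv 1, ch nv' (sig sw 1));
        (ch nv 2, ch nv' (sig sw 2))] P.
Definition joinsI (sw : bool) :=
  [:: (2, 2); (3, (sig sw 1).+2); (4, (sig sw 2).+2)].

Definition insII G l o sw P :=
  let z := end1 G l o in let z' := end2 G l o in
  mkIns G (liftS z) (ch nv 0) (slot_ty G z) (~~ slot_ty G z) None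
    [:: (ch nv' 0, liftS z'); (ch nv 1, ch nv' (sig sw 1));
        (ch nv 2, ch nv' (sig sw 2))] P.
Definition joinsII (sw : bool) :=
  [:: (2, 1); (3, (sig sw 1).+2); (4, (sig sw 2).+2)].

(* (III): a = 3 if ab else 4 (child index ca), b the other (child index cb);
   e2(v) is joined to e_{cc+2}(v') with cc = 1 if cb' else 2 *)
Definition cA (ab : bool) : nat := if ab then 1 else 2.
Definition cB (ab : bool) : nat := if ab then 2 else 1.

Definition insIII G l o ab cb' P :=
  let z := end1 G l o in let z' := end2 G l o in
  mkIns G (liftS z) (ch nv (cA ab)) (slot_ty G z) (slot_ty G z) None
    [:: (ch nv 0, ch nv' (cA cb')); (ch nv (cB ab), ch nv' 0);
        (ch nv' (cB cb'), liftS z')] P.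
Definition joinsIII (ab cb' : bool) :=
  [:: ((cA ab).+2, 1); (2, (cA cb').+2); ((cB ab).+2, 2)].

(* (IIs): insertion into the solid edge whose child end is the vertex z *)
Definition insIIs G (z : V) sw P :=
  mkIns G (liftS (par G z)) (ch nv 0) (ty G z) (~~ ty G z)
    (Some (z, ch nv' 0))
    [:: (ch nv 1, ch nv' (sig sw 1)); (ch nv 2, ch nv' (sig sw 2))] P.
Definition joinsIIs (sw : bool) := joinsII sw.

(* (IIIs): e1(v') = e_a(v), e1(z) = e_c(v') with c = 3 if cc else 4 *)
Definition insIIIs G (z : V) ab cc P :=
  mkIns G (liftS (par G z)) (ch nv (cA ab)) (ty G z) (ty G z)
    (Some (z, ch nv' (cA cc)))
    [:: (ch nv 0, ch nv' (cB cc)); (ch nv (cB ab), ch nv' 0)] P.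
Definition joinsIIIs (ab cc : bool) :=
  [:: ((cA ab).+2, 1); (2, (cB cc).+2); ((cB ab).+2, 2)].

End Insertion.

Definition map_slot (V W : finType) (f : V -> W) (s : slot V) : slot W :=
  match s with inl b => inl b | inr (u, c) => inr (f u, c) end.

Definition giso (V W : finType) (f : V -> W) (G : gdata V) (H : gdata W) :=
  bijective f /\
  [/\ (forall v, par H (f v) = map_slot f (par G v)),
      (forall v, ty H (f v) = ty G v),
      (forall s, free G s -> dash H (map_slot f s) = map_slot f (dash G s)),
      (forall v, wav H (f v) = f (wav G v))
    & (forall v, prop H (f v) = prop G v)].

Definition triv_graph : gdata void :=
  {| par := fun v => of_void _ v;
     ty := fun v => of_void _ v;
     dash := fun s => match s with
                      | inl b => inl (~~ b)
                      | inr vc => of_void _ vc.1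
                      end;
     wav := fun v => of_void _ v;
     prop := fun v => of_void _ v |}.

Inductive melonic : forall V : finType, gdata V -> Prop :=
  | mel_triv : melonic triv_graph
  | mel_I (V : finType) (G : gdata V) l o sw P :
      melonic G -> free G l -> leading P (joinsI sw) ->
      melonic (insI G l o sw P)
  | mel_II (V : finType) (G : gdata V) l o sw P :
      melonic G -> free G l -> leading P (joinsII sw) ->
      melonic (insII G l o sw P)
  | mel_III (V : finType) (G : gdata V) l o ab cb' P :
      melonic G -> free G l -> leading P (joinsIII ab cb') ->
      melonic (insIII G l o ab cb' P)
  | mel_IIs (V : finType) (G : gdata V) z sw P :
      melonic G -> leading P (joinsIIs sw) ->
      melonic (insIIs G z sw P)
  | mel_IIIs (V : finType) (G : gdata V) z ab cc P :
      melonic G -> leading P (joinsIIIs ab cc) ->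
      melonic (insIIIs G z ab cc P)
  | mel_iso (V W : finType) (G : gdata V) (H : gdata W) (f : V -> W) :
      melonic G -> giso f G H -> melonic H.

(* Main.v *)
Require Import Defs.
From HB Require Import structures.
From mathcomp Require Import all_boot all_order all_algebra.
From mathcomp Require Import all_classical all_reals all_analysis.
Import Order.TTheory GRing.Theory Num.Theory.
From mathcomp Require Import zify.
Import Defs.

Set Implicit Arguments.
Unset Strict Implicit.
Unset Printing Implicit Defensive.


Section Gen.
Variable V : finType.
Implicit Types (G : gdata V) (s : slot V).

Definition padm G (r : nat) (x : att V) : Prop :=
  [/\ (forall v, mj x v <= mS x v /\ mk x v <= mS x v),
      (forall v, mom_end x v 1 = slot_mom r x (par G v))
    & (forall v, prop_holds (prop G v) (x v) (x (wav G v)))].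

Definition Good G := forall s, free G s ->
  [/\ free G (dash G s), dash G (dash G s) = s & dash G s != s].

Definition Inj G := exists l0, free G l0 /\ forall r x y, padm G r x -> padm G r y ->
   (forall s, free G s -> s != l0 -> s != dash G l0 -> slot_mom r x s = slot_mom r y s) -> x = y.

Lemma freeP G s : reflect (forall v, par G v != s) (free G s).
Proof. exact: forallP. Qed.

End Gen.

Lemma inord3 (i j : nat) : (i < 3)%N -> (j < 3)%N ->
  ((inord i : 'I_3) == inord j) = (i == j).
Proof. by move=> hi hj; rewrite -val_eqE /= !inordK. Qed.

Lemma prop_det P (a b c : nat * nat * nat) :
  prop_holds P a b -> prop_holds P a c ->
  (b.1.2 <= b.1.1)%N -> (b.2 <= b.1.1)%N ->
  (c.1.2 <= c.1.1)%N -> (c.2 <= c.1.1)%N -> b = c.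
Proof.
case: a => [[s j] k]; case: b => [[s1 j1] k1]; case: c => [[s2 j2] k2] /=.
by case: P => /= [[-> [-> ->]] [<- [h1 h2]]|[-> [-> ->]] [<- [h1 h2]]|
  [-> [-> ->]] [<- [h1 h2]]|[-> [-> ->]] [<- [h1 h2]]|
  [-> [-> ->]] [<- [h1 h2]]|[-> [-> ->]] [<- [h1 h2]]|
  [-> [-> ->]] [<- [h1 h2]]|[-> [-> ->]] [<- [h1 h2]]] *;
  do ! (congr pair); lia.
Qed.

Lemma triv_good : Good triv_graph.
Proof. by case=> [b|[[] ?]] _ /=; rewrite negbK; split=> //; [apply/forallP=> -[]|case: b]. Qed.

Lemma triv_inj : Inj triv_graph.
Proof.
exists (inl true); split; first by apply/forallP=> -[].
by move=> r x y _ _ _; apply/ffunP=> -[].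
Qed.

Section Iso.
Variables (V W : finType) (f : V -> W) (G : gdata V) (H : gdata W).
Hypothesis iso : giso f G H.

Lemma map_slot_inj : injective (map_slot f).
Proof.
case: iso => -[g fg gf] _.
by case=> [b|[u c]] [b'|[u' c']] //= [] => [->|/(can_inj fg) -> ->].
Qed.

Lemma map_slot_surj t : exists s, t = map_slot f s.
Proof.
case: iso => -[g fg gf] _.
case: t => [b|[w c]]; first by exists (inl b).
by exists (inr (g w, c)); rewrite /= gf.
Qed.

Lemma free_map s : free H (map_slot f s) = free G s.
Proof.
case: iso => -[g fg gf] [hpar _ _ _ _].
apply/freeP/freeP => h v.
  by have := h (f v); rewrite hpar (inj_eq map_slot_inj).
by rewrite -[v]gf hpar (inj_eq map_slot_inj).
Qed.

Lemma slot_mom_map r (x : att W) s :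
  slot_mom r x (map_slot f s) = slot_mom r [ffun v => x (f v)] s.
Proof. by case: s => [b|[u c]] //=; rewrite /mom_end /mS /mj /mk ffunE. Qed.

Lemma iso_good : Good G -> Good H.
Proof.
case: iso => -[g fg gf] [hpar hty hdash hwav hprop] hg t.
have [s ->] := map_slot_surj t.
rewrite free_map => fs; have [f1 f2 f3] := hg s fs.
by rewrite hdash // free_map hdash // f2 (inj_eq map_slot_inj).
Qed.

Lemma iso_inj : Inj G -> Inj H.
Proof.
case: iso => -[g fg gf] [hpar hty hdash hwav hprop] [l0 [fl0 hinj]].
exists (map_slot f l0); rewrite free_map; split=> // r x y hx hy hag.
have padm_pull (z : att W) : padm H r z -> padm G r [ffun v => z (f v)].
  case=> h1 h2 h3; split.
  - by move=> v; rewrite /mj /mS /mk ffunE; apply: h1.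
  - by move=> v; rewrite -slot_mom_map -hpar -h2 /mom_end /mj ffunE.
  - by move=> v; rewrite !ffunE -hprop -hwav; apply: h3.
have e := hinj r _ _ (padm_pull _ hx) (padm_pull _ hy).
have {e} : [ffun v => x (f v)] = [ffun v => y (f v)].
  apply: e => s fs ns nds; rewrite -!slot_mom_map; apply: hag.
  - by rewrite free_map.
  - by rewrite (inj_eq map_slot_inj).
  - by rewrite hdash // (inj_eq map_slot_inj).
move=> e; apply/ffunP => w; rewrite -[w]gf.
by have := congr1 (fun z : att V => z (g w)) e; rewrite !ffunE.
Qed.

End Iso.


Arguments ch : simpl never.

Section Ins.
Variable V : finType.
Implicit Types (G : gdata V) (s : slot V).

Definition restr (x : att (V + bool)%type) : att V := [ffun u => x (inl u)].

Lemma slot_mom_lift r (x : att (V + bool)%type) s :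
  slot_mom r x (liftS s) = slot_mom r (restr x) s.
Proof. by case: s => [b|[u c]] //=; rewrite /mom_end /mS /mj /mk ffunE. Qed.

Lemma slot_mom_ch r (x : att (V + bool)%type) y i : (i < 3)%N ->
  slot_mom r x (ch y i) = mom_end x y (i + 2).
Proof. by move=> hi; rewrite /ch /= inordK. Qed.

Lemma liftS_inj : injective (@liftS V).
Proof. by case=> [b|[u c]] [b'|[u' c']] //= [] => [->|-> ->]. Qed.

Lemma liftS_eq s t : (liftS s == liftS t) = (s == t).
Proof. exact: (inj_eq liftS_inj). Qed.

Lemma liftS_chF s b i : (liftS s == ch (inr b) i) = false.
Proof. by rewrite /ch; case: s => [b0|[u c]]. Qed.

Lemma ch_liftSF s b i : (ch (inr b) i == liftS s) = false.
Proof. by rewrite /ch; case: s => [b0|[u c]]. Qed.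

Lemma ch_eq y y' i j : (i < 3)%N -> (j < 3)%N ->
  (ch y i == ch y' j :> slot (V + bool)%type) = (y == y') && (i == j).
Proof.
move=> hi hj; rewrite /ch.
apply/eqP/andP => [[-> /(congr1 val)]|[/eqP -> /eqP ->]] //.
by rewrite /= !inordK // => ->.
Qed.

Lemma nvE : (nv V == nv' V) = false. Proof. by []. Qed.
Lemma nv'E : (nv' V == nv V) = false. Proof. by []. Qed.
Lemma nvvE : (nv V == nv V) = true. Proof. by []. Qed.
Lemma nv'vE : (nv' V == nv' V) = true. Proof. by []. Qed.

Lemma slot_split (t : slot (V + bool)%type) :
  (exists s, t = liftS s) \/ (exists b i, (i < 3)%N /\ t = ch (inr b) i).
Proof.
case: t => [b|[[u|b] c]]; first by left; exists (inl b).
  by left; exists (inr (u, c)).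
right; exists b, c; split => //; rewrite /ch; congr (inr (_, _)).
by apply: val_inj; rewrite /= inordK.
Qed.

Lemma att_ext (x y : att (V + bool)%type) :
  restr x = restr y -> x (nv V) = y (nv V) -> x (nv' V) = y (nv' V) -> x = y.
Proof.
move=> e e1 e2; apply/ffunP => -[u|[|]] //.
by have := congr1 (fun z : att V => z u) e; rewrite !ffunE.
Qed.

Lemma tripleE (a b : nat * nat * nat) :
  a.1.1 = b.1.1 -> a.1.2 = b.1.2 -> a.2 = b.2 -> a = b.
Proof. by case: a => [[? ?] ?]; case: b => [[? ?] ?] /= -> -> ->. Qed.

Section MK.
Variables (G : gdata V) (pv pv' : slot (V + bool)%type) (tv tv' : bool)
  (oz : option (V * slot (V + bool)%type))
  (pairs : seq (slot (V + bool)%type * slot (V + bool)%type)) (P : prop8).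
Let G' := mkIns G pv pv' tv tv' oz pairs P.

Lemma mk_final r (x y : att (V + bool)%type) :
  padm G' r x -> padm G' r y -> restr x = restr y -> x (nv V) = y (nv V) -> x = y.
Proof.
move=> [hx1 _ hx3] [hy1 _ hy3] e e1; apply: att_ext => //.
have h1 := hx3 (nv V); have h2 := hy3 (nv V); rewrite /= e1 in h1.
case: (hx1 (nv' V)) (hy1 (nv' V)) => [a1 a2] [b1 b2].
exact: (prop_det h1 h2 a1 a2 b1 b2).
Qed.

Lemma mk_dash_lift s : pair_lookup pairs (liftS s) = None ->
  dash G' (liftS s) = liftS (dash G s).
Proof. by rewrite /G' /=; case: s => [b|[u c]] /= ->. Qed.

Lemma mk_dash_new t : pair_lookup pairs t = Some (t) -> dash G' t = t.
Proof. by rewrite /G' /= => ->. Qed.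

End MK.

Section MKNone.
Variables (G : gdata V) (pv pv' : slot (V + bool)%type) (tv tv' : bool)
  (pairs : seq (slot (V + bool)%type * slot (V + bool)%type)) (P : prop8).
Let G' := mkIns G pv pv' tv tv' None pairs P.

Lemma restr_padm r x : padm G' r x -> padm G r (restr x).
Proof.
case=> h1 h2 h3; split.
- by move=> v; rewrite /mj /mS /mk ffunE; apply: h1.
- by move=> v; rewrite -slot_mom_lift; have := h2 (inl v);
    rewrite /mom_end /mj ffunE.
- by move=> v; rewrite !ffunE; apply: h3.
Qed.

Lemma freeN_lift s : free G' (liftS s) = [&& free G s, pv != liftS s & pv' != liftS s].
Proof.
apply/freeP/and3P => [h|[/freeP h1 h2 h3]].
  split; [apply/freeP => v; rewrite -liftS_eq; exact: h (inl v)|exact: h (nv V)|exact: h (nv' V)].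
by case=> [u|[]] //=; rewrite liftS_eq.
Qed.

Lemma freeN_new b i : (i < 3)%N -> free G' (ch (inr b) i) = (pv != ch (inr b) i) && (pv' != ch (inr b) i).
Proof.
move=> hi; apply/freeP/andP => [h|[h2 h3]]; first by split; [exact: h (nv V)|exact: h (nv' V)].
by case=> [u|[]] //=; rewrite liftS_chF.
Qed.

End MKNone.
End Ins.

Lemma sigT1 : sig true 1 = 2. Proof. by []. Qed.
Lemma sigT2 : sig true 2 = 1. Proof. by []. Qed.
Lemma sigF i : sig false i = i. Proof. by []. Qed.


Arguments ch : simpl never.

Lemma i3_cases i : (i < 3)%N -> i = 0%N \/ i = 1%N \/ i = 2%N.
Proof. lia. Qed.

Ltac slsimp := rewrite ?liftS_chF ?ch_liftSF ?liftS_eq ?ch_eq ?nvE ?nv'E ?nvvE ?nv'vE //=.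

Section CaseI.
Variables (V : finType) (G : gdata V) (l : slot V) (o sw : bool) (P : prop8).
Hypothesis gG : Good G.
Hypothesis fl : free G l.
Let x := end1 G l o.
Let y := end2 G l o.
Let G' := insI G l o sw P.

Lemma I_facts : [/\ free G x, free G y, dash G x = y & dash G y = x].
Proof.
have [f1 f2 _] := gG fl.
by rewrite /x /y /end1 /end2; case: o.
Qed.

Lemma I_free_lift s : free G' (liftS s) = [&& free G s, x != s & y != s].
Proof. by rewrite freeN_lift !liftS_eq. Qed.

Lemma I_free_new b i : (i < 3)%N -> free G' (ch (inr b) i).
Proof. by move=> hi; rewrite freeN_new //; slsimp. Qed.

Lemma I_dash_lift s : dash G' (liftS s) = liftS (dash G s).
Proof. by rewrite mk_dash_lift //=; slsimp. Qed.

Lemma I_good : Good G'.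
Proof.
have [fx fy dx dy] := I_facts.
move=> t; case: (slot_split t) => [[s ->]|[b [i [hi ->]]]].
  rewrite I_free_lift => /and3P [fs nxs nys].
  have [f1 f2 f3] := gG fs.
  rewrite !I_dash_lift f2 I_free_lift f1 liftS_eq; split=> //=; apply/andP; split.
    by apply: contra_neq nys => e; rewrite -dx e f2.
  by apply: contra_neq nxs => e; rewrite -dy e f2.
move=> _; rewrite /G' /insI /=.
case: (i3_cases hi) => [e|[e|e]]; subst i; case: b; case: sw; rewrite /sig /=; slsimp.
all: try (split; [apply: I_free_new | | ]).
all: try done.
all: rewrite /=; slsimp.
Qed.

Lemma I_inj : Inj G -> Inj G'.
Proof.
move=> [l0 [fl0 hinj]].
have [fx fy dx dy] := I_facts.
have jv r (a : att (V + bool)%type) : padm G' r a -> mj a (nv V) = slot_mom r (restr a) x.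
  by case=> _ h _; rewrite -slot_mom_lift -(h (nv V)).
have jv' r (a : att (V + bool)%type) : padm G' r a -> mj a (nv' V) = slot_mom r (restr a) y.
  by case=> _ h _; rewrite -slot_mom_lift -(h (nv' V)).
case touched: ((l0 == x) || (l0 == y)).
  have d0 : dash G' (ch (nv V) 0) = ch (nv' V) 0 by rewrite /G' /insI /=; slsimp.
  exists (ch (nv V) 0); split; first exact: I_free_new.
  rewrite d0 => r a b ha hb hag.
  have e0 : restr a = restr b.
    apply: (hinj r _ _ (restr_padm ha) (restr_padm hb)) => s fs n0 n1.
    have [nx ny] : x != s /\ y != s.
      case/orP: touched => /eqP e; subst l0.
        by rewrite dx in n1; split; rewrite eq_sym.
      by rewrite dy in n1; split; rewrite eq_sym.
    rewrite -!slot_mom_lift; apply: hag; first by rewrite I_free_lift fs nx ny.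
      by slsimp.
    by slsimp.
  rewrite /G' /insI /= in ha hb; apply: (mk_final ha hb e0).
  have h1 := hag _ (I_free_new false (isT : 1 < 3)%N) ltac:(by slsimp) ltac:(by slsimp).
  have h2 := hag _ (I_free_new false (isT : 2 < 3)%N) ltac:(by slsimp) ltac:(by slsimp).
  rewrite !slot_mom_ch //= in h1 h2.
  have h0 : mj a (nv V) = mj b (nv V) by rewrite (jv _ _ ha) (jv _ _ hb) e0.
  case: ha => [/(_ (nv V)) [ba1 ba2] _ _]; case: hb => [/(_ (nv V)) [bb1 bb2] _ _].
  move: h0 h1 h2 ba1 ba2 bb1 bb2; rewrite /mj /mk /mS /nv /nv' => *.
  apply: tripleE; lia.
exists (liftS l0); move/negbT: touched; rewrite negb_or => /andP [nx0 ny0].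
rewrite I_free_lift fl0 eq_sym nx0 eq_sym ny0 I_dash_lift; split=> // r a b ha hb hag.
have hv (w : bool) : a (inr w) = b (inr w).
  have h0 := hag _ (I_free_new w (isT : 0 < 3)%N) ltac:(by slsimp) ltac:(by slsimp).
  have h1 := hag _ (I_free_new w (isT : 1 < 3)%N) ltac:(by slsimp) ltac:(by slsimp).
  have h2 := hag _ (I_free_new w (isT : 2 < 3)%N) ltac:(by slsimp) ltac:(by slsimp).
  rewrite !slot_mom_ch //= in h0 h1 h2.
  case: ha => [/(_ (inr w)) [ba1 ba2] _ _]; case: hb => [/(_ (inr w)) [bb1 bb2] _ _].
  move: h0 h1 h2 ba1 ba2 bb1 bb2; rewrite /mj /mk /mS /nv /nv' => *.
  apply: tripleE; lia.
have e0 : restr a = restr b.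
  apply: (hinj r _ _ (restr_padm ha) (restr_padm hb)) => s fs n0 n1.
  case: (eqVneq x s) => [<-|nx]; first by rewrite -(jv _ _ ha) -(jv _ _ hb) /mj hv.
  case: (eqVneq y s) => [<-|ny]; first by rewrite -(jv' _ _ ha) -(jv' _ _ hb) /mj hv.
  rewrite -!slot_mom_lift; apply: hag; first by rewrite I_free_lift fs nx ny.
    by rewrite liftS_eq.
  by rewrite liftS_eq.
rewrite /G' /insI /= in ha hb; exact: (mk_final ha hb e0 (hv false)).
Qed.

End CaseI.


Arguments ch : simpl never.



Section CaseII.
Variables (V : finType) (G : gdata V) (l : slot V) (o sw : bool) (P : prop8).
Hypothesis gG : Good G.
Hypothesis fl : free G l.
Let z := end1 G l o.
Let z' := end2 G l o.
Let G' := insII G l o sw P.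

Lemma II_facts : [/\ free G z, free G z', dash G z = z', dash G z' = z & z != z'].
Proof.
have [f1 f2 f3] := gG fl.
by rewrite /z /z' /end1 /end2; case: o; rewrite // eq_sym.
Qed.

Lemma II_free_lift s : free G' (liftS s) = (free G s) && (z != s).
Proof. by rewrite freeN_lift !liftS_eq; slsimp; rewrite andbT. Qed.

Lemma II_free_new b i : (i < 3)%N -> free G' (ch (inr b) i) = ~~ (~~ b && (i == 0%N)).
Proof. by move=> hi; rewrite freeN_new //; slsimp; case: b; rewrite /= ?andbT // eq_sym. Qed.

Lemma II_dash_lift s : dash G' (liftS s) = if s == z' then ch (nv' V) 0 else liftS (dash G s).
Proof.
rewrite /G' /insII /=; case: (eqVneq s z') => [->|ne]; first by slsimp; rewrite eqxx.
slsimp; rewrite (negbTE ne); by case: (s) ne => [b|[u c]].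
Qed.

Lemma II_good : Good G'.
Proof.
have [fz fz' dz dz' nzz] := II_facts.
move=> t; case: (slot_split t) => [[s ->]|[b [i [hi ->]]]].
  rewrite II_free_lift => /andP [fs nzs].
  have [f1 f2 f3] := gG fs.
  case: (eqVneq s z') => [e|ne].
    subst s; rewrite II_dash_lift eqxx.
    have d' : dash G' (ch (nv' V) 0) = liftS z' by rewrite /G' /insII /= eqxx.
    by rewrite d'; split => //; [rewrite II_free_new | slsimp].
  rewrite II_dash_lift (negbTE ne) II_dash_lift II_free_lift f1 f2 liftS_eq f3.
  case: (eqVneq (dash G s) z') => [e2|_]; first by move: nzs; rewrite -dz' -e2 f2 eqxx.
  split=> //; apply: contra_neq ne => e; by rewrite -f2 -e dz.
move=> hf; rewrite /G' /insII /=.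
case: (i3_cases hi) => [e|[e|e]]; subst i; case: b hf; case: sw;
  rewrite ?sigT1 ?sigT2 ?sigF /=; rewrite ?freeN_new //; slsimp.
all: rewrite ?eqxx /= ?freeN_new ?freeN_lift //; slsimp.
all: by rewrite fz' nzz.
Qed.

Lemma II_inj : Inj G -> Inj G'.
Proof.
move=> [l0 [fl0 hinj]].
have [fz fz' dz dz' nzz] := II_facts.
have jv r (a : att (V + bool)%type) : padm G' r a -> mj a (nv V) = slot_mom r (restr a) z.
  by case=> _ h _; rewrite -slot_mom_lift -(h (nv V)).
have jv' r (a : att (V + bool)%type) : padm G' r a -> mj a (nv' V) = mS a (nv V) - mj a (nv V).
  by case=> _ h _; have := h (nv' V); rewrite /G' /insII /= inordK.
have d' : dash G' (ch (nv' V) 0) = liftS z' by rewrite /G' /insII /= eqxx.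
case touched: ((l0 == z) || (l0 == z')).
  exists (ch (nv' V) 0); split; first by rewrite II_free_new.
  rewrite d' => r a b ha hb hag.
  have e0 : restr a = restr b.
    apply: (hinj r _ _ (restr_padm ha) (restr_padm hb)) => s fs n0 n1.
    have [nx ny] : z != s /\ z' != s.
      case/orP: touched => /eqP e; subst l0.
        by rewrite dz in n1; split; rewrite eq_sym.
      by rewrite dz' in n1; split; rewrite eq_sym.
    rewrite -!slot_mom_lift; apply: hag; first by rewrite II_free_lift fs nx.
      by slsimp.
    by rewrite liftS_eq eq_sym.
  have h1 := hag _ (ltac:(by rewrite II_free_new) : free G' (ch (nv V) 1)) ltac:(by slsimp) ltac:(by slsimp).
  have h2 := hag _ (ltac:(by rewrite II_free_new) : free G' (ch (nv V) 2)) ltac:(by slsimp) ltac:(by slsimp).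
  rewrite !slot_mom_ch //= in h1 h2.
  have h0 : mj a (nv V) = mj b (nv V) by rewrite (jv _ _ ha) (jv _ _ hb) e0.
  rewrite /G' /insII /= in ha hb; apply: (mk_final ha hb e0).
  case: ha => [/(_ (nv V)) [ba1 ba2] _ _]; case: hb => [/(_ (nv V)) [bb1 bb2] _ _].
  move: h0 h1 h2 ba1 ba2 bb1 bb2; rewrite /mj /mk /mS /nv /nv' => *.
  apply: tripleE; lia.
exists (liftS l0); move/negbT: touched; rewrite negb_or => /andP [nx0 ny0].
rewrite II_free_lift fl0 eq_sym nx0 II_dash_lift (negbTE ny0); split=> // r a b ha hb hag.
have hv' : a (nv' V) = b (nv' V).
  have h0 := hag _ (ltac:(by rewrite II_free_new) : free G' (ch (nv' V) 0)) ltac:(by slsimp) ltac:(by slsimp).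
  have h1 := hag _ (ltac:(by rewrite II_free_new) : free G' (ch (nv' V) 1)) ltac:(by slsimp) ltac:(by slsimp).
  have h2 := hag _ (ltac:(by rewrite II_free_new) : free G' (ch (nv' V) 2)) ltac:(by slsimp) ltac:(by slsimp).
  rewrite !slot_mom_ch //= in h0 h1 h2.
  case: ha => [/(_ (nv' V)) [ba1 ba2] _ _]; case: hb => [/(_ (nv' V)) [bb1 bb2] _ _].
  move: h0 h1 h2 ba1 ba2 bb1 bb2; rewrite /mj /mk /mS /nv /nv' => *.
  apply: tripleE; lia.
have hv : a (nv V) = b (nv V).
  have h1 := hag _ (ltac:(by rewrite II_free_new) : free G' (ch (nv V) 1)) ltac:(by slsimp) ltac:(by slsimp).
  have h2 := hag _ (ltac:(by rewrite II_free_new) : free G' (ch (nv V) 2)) ltac:(by slsimp) ltac:(by slsimp).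
  rewrite !slot_mom_ch //= in h1 h2.
  have h0 := jv' _ _ ha; have h0' := jv' _ _ hb.
  have h3 : mj a (nv' V) = mj b (nv' V) by rewrite /mj hv'.
  case: ha => [/(_ (nv V)) [ba1 ba2] _ _]; case: hb => [/(_ (nv V)) [bb1 bb2] _ _].
  move: h0 h0' h3 h1 h2 ba1 ba2 bb1 bb2; rewrite /mj /mk /mS /nv /nv' => *.
  apply: tripleE; lia.
have e0 : restr a = restr b.
  apply: (hinj r _ _ (restr_padm ha) (restr_padm hb)) => s fs n0 n1.
  case: (eqVneq z s) => [<-|nx]; first by rewrite -(jv _ _ ha) -(jv _ _ hb) /mj hv.
  rewrite -!slot_mom_lift; apply: hag; first by rewrite II_free_lift fs nx.
    by rewrite liftS_eq.
  by rewrite liftS_eq.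
rewrite /G' /insII /= in ha hb; exact: (mk_final ha hb e0 hv).
Qed.

End CaseII.


Arguments ch : simpl never.



Lemma cA_lt ab : (cA ab < 3)%N. Proof. by case: ab. Qed.
Lemma cB_lt ab : (cB ab < 3)%N. Proof. by case: ab. Qed.
#[local] Hint Resolve cA_lt cB_lt : core.
Lemma cAB ab : (cA ab == cB ab) = false. Proof. by case: ab. Qed.
Lemma cBA ab : (cB ab == cA ab) = false. Proof. by case: ab. Qed.
Lemma cA0 ab : (cA ab == 0%N) = false. Proof. by case: ab. Qed.
Lemma cB0 ab : (cB ab == 0%N) = false. Proof. by case: ab. Qed.
Lemma c0A ab : (0%N == cA ab) = false. Proof. by case: ab. Qed.
Lemma c0B ab : (0%N == cB ab) = false. Proof. by case: ab. Qed.

Ltac slsimp2 := rewrite ?liftS_chF ?ch_liftSF ?liftS_eq ?ch_eq ?cA_lt ?cB_lt ?nvE ?nv'E ?nvvE ?nv'vE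
  ?cAB ?cBA ?cA0 ?cB0 ?c0A ?c0B ?eqxx //=.

Section CaseIII.
Variables (V : finType) (G : gdata V) (l : slot V) (o ab cb : bool) (P : prop8).
Hypothesis gG : Good G.
Hypothesis fl : free G l.
Let z := end1 G l o.
Let z' := end2 G l o.
Let G' := insIII G l o ab cb P.

Lemma III_facts : [/\ free G z, free G z', dash G z = z', dash G z' = z & z != z'].
Proof.
have [f1 f2 f3] := gG fl.
by rewrite /z /z' /end1 /end2; case: o; rewrite // eq_sym.
Qed.

Lemma III_free_lift s : free G' (liftS s) = (free G s) && (z != s).
Proof. by rewrite freeN_lift !liftS_eq; slsimp; rewrite andbT. Qed.

Lemma III_free_new b i : (i < 3)%N -> free G' (ch (inr b) i) = ~~ (~~ b && (i == cA ab)).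
Proof.
move=> hi; rewrite freeN_new //; slsimp2.
by case: b; rewrite //= eq_sym.
Qed.

Lemma III_dash_lift s : dash G' (liftS s) = if s == z' then ch (nv' V) (cB cb) else liftS (dash G s).
Proof.
rewrite /G' /insIII /=; case: (eqVneq s z') => [->|ne]; first by slsimp; rewrite eqxx.
slsimp; rewrite (negbTE ne); by case: (s) ne => [b|[u c]].
Qed.

Lemma III_d' : dash G' (ch (nv' V) (cB cb)) = liftS z'.
Proof. by rewrite /G' /insIII /=; slsimp2. Qed.

Lemma III_good : Good G'.
Proof.
have [fz fz' dz dz' nzz] := III_facts.
move=> t; case: (slot_split t) => [[s ->]|[b [i [hi ->]]]].
  rewrite III_free_lift => /andP [fs nzs].
  have [f1 f2 f3] := gG fs.
  case: (eqVneq s z') => [e|ne].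
    subst s; rewrite III_dash_lift eqxx III_d'.
    by split => //; [rewrite III_free_new ?cB_lt // andbC cBA | slsimp].
  rewrite III_dash_lift (negbTE ne) III_dash_lift III_free_lift f1 f2 liftS_eq f3.
  case: (eqVneq (dash G s) z') => [e2|_]; first by move: nzs; rewrite -dz' -e2 f2 eqxx.
  split=> //; apply: contra_neq ne => e; by rewrite -f2 -e dz.
move=> hf; rewrite /G' /insIII /=; move: hf; rewrite /G'; clear G'.
case: (i3_cases hi) => [e|[e|e]]; subst i; case: b; case: ab; case: cb;
  rewrite /cA /cB /=; rewrite ?freeN_new //; slsimp.
all: rewrite ?eqxx /= ?freeN_new ?freeN_lift //; slsimp.
all: by rewrite fz' nzz.
Qed.

Lemma III_inj : Inj G -> Inj G'.
Proof.
move=> [l0 [fl0 hinj]].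
have [fz fz' dz dz' nzz] := III_facts.
have jv r (a : att (V + bool)%type) : padm G' r a -> mj a (nv V) = slot_mom r (restr a) z.
  by case=> _ h _; rewrite -slot_mom_lift -(h (nv V)).
have jv' r (a : att (V + bool)%type) : padm G' r a -> mj a (nv' V) = mom_end a (nv V) (cA ab + 2).
  by case=> _ h _; have := h (nv' V); rewrite /G' /insIII /= inordK ?cA_lt.
have fr0 : free G' (ch (nv V) 0) by rewrite III_free_new //= c0A.
have frB : free G' (ch (nv V) (cB ab)) by rewrite III_free_new ?cB_lt //= cBA.
have frv' i : (i < 3)%N -> free G' (ch (nv' V) i) by move=> hi; rewrite III_free_new.
case touched: ((l0 == z) || (l0 == z')).
  exists (ch (nv' V) (cB cb)); split; first by rewrite frv' ?cB_lt.
  rewrite III_d' => r a b ha hb hag.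
  have e0 : restr a = restr b.
    apply: (hinj r _ _ (restr_padm ha) (restr_padm hb)) => s fs n0 n1.
    have [nx ny] : z != s /\ z' != s.
      case/orP: touched => /eqP e; subst l0.
        by rewrite dz in n1; split; rewrite eq_sym.
      by rewrite dz' in n1; split; rewrite eq_sym.
    rewrite -!slot_mom_lift; apply: hag; first by rewrite III_free_lift fs nx.
      by slsimp.
    by rewrite liftS_eq eq_sym.
  have h1 := hag _ fr0 ltac:(by slsimp2) ltac:(by slsimp2).
  have h2 := hag _ frB ltac:(by slsimp2) ltac:(by slsimp).
  rewrite !slot_mom_ch ?cB_lt //= in h1 h2.
  have h0 : mj a (nv V) = mj b (nv V) by rewrite (jv _ _ ha) (jv _ _ hb) e0.
  rewrite /G' /insIII /= in ha hb; apply: (mk_final ha hb e0).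
  case: ha => [/(_ (nv V)) [ba1 ba2] _ _]; case: hb => [/(_ (nv V)) [bb1 bb2] _ _].
  move: h0 h1 h2 ba1 ba2 bb1 bb2; case: (ab); rewrite /cB /= /mj /mk /mS;
  case: (a (nv V)) => [[sa ja] ka]; case: (b (nv V)) => [[sb jb] kb] /= *;
  apply: tripleE => /=; lia.
exists (liftS l0); move/negbT: touched; rewrite negb_or => /andP [nx0 ny0].
rewrite III_free_lift fl0 eq_sym nx0 III_dash_lift (negbTE ny0); split=> // r a b ha hb hag.
have hv' : a (nv' V) = b (nv' V).
  have h0 := hag _ (frv' 0%N isT) ltac:(by slsimp) ltac:(by slsimp).
  have h1 := hag _ (frv' 1%N isT) ltac:(by slsimp) ltac:(by slsimp).
  have h2 := hag _ (frv' 2%N isT) ltac:(by slsimp) ltac:(by slsimp).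
  rewrite !slot_mom_ch //= in h0 h1 h2.
  case: ha => [/(_ (nv' V)) [ba1 ba2] _ _]; case: hb => [/(_ (nv' V)) [bb1 bb2] _ _].
  move: h0 h1 h2 ba1 ba2 bb1 bb2; rewrite /mj /mk /mS /nv /nv' => *.
  apply: tripleE; lia.
have hv : a (nv V) = b (nv V).
  have h1 := hag _ fr0 ltac:(by slsimp2) ltac:(by slsimp2).
  have h2 := hag _ frB ltac:(by slsimp) ltac:(by slsimp).
  rewrite !slot_mom_ch ?cB_lt //= in h1 h2.
  have h0 := jv' _ _ ha; have h0' := jv' _ _ hb.
  have h3 : mj a (nv' V) = mj b (nv' V) by rewrite /mj hv'.
  case: ha => [/(_ (nv V)) [ba1 ba2] _ _]; case: hb => [/(_ (nv V)) [bb1 bb2] _ _].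
  move: h0 h0' h3 h1 h2 ba1 ba2 bb1 bb2; case: (ab); rewrite /cA /cB /= /mj /mk /mS;
  case: (a (nv V)) => [[sa ja] ka]; case: (b (nv V)) => [[sb jb] kb] /= *;
  apply: tripleE => /=; lia.
have e0 : restr a = restr b.
  apply: (hinj r _ _ (restr_padm ha) (restr_padm hb)) => s fs n0 n1.
  case: (eqVneq z s) => [<-|nx]; first by rewrite -(jv _ _ ha) -(jv _ _ hb) /mj hv.
  rewrite -!slot_mom_lift; apply: hag; first by rewrite III_free_lift fs nx.
    by rewrite liftS_eq.
  by rewrite liftS_eq.
rewrite /G' /insIII /= in ha hb; exact: (mk_final ha hb e0 hv).
Qed.

End CaseIII.


Arguments ch : simpl never.
#[local] Hint Resolve cA_lt cB_lt : core.



Section MKSome.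
Variables (V : finType) (G : gdata V) (z : V) (pv' sz : slot (V + bool)%type) (tv tv' : bool)
  (pairs : seq (slot (V + bool)%type * slot (V + bool)%type)) (P : prop8).
Hypothesis hpv' : forall s, pv' != liftS s.
Hypothesis hsz : forall s, sz != liftS s.
Let G' := mkIns G (liftS (par G z)) pv' tv tv' (Some (z, sz)) pairs P.

Lemma freeS_lift s : free G' (liftS s) = free G s.
Proof.
apply/idP/idP => /freeP h; apply/freeP => u.
  case: (eqVneq u z) => [->|ne]; first by have := h (nv V); rewrite /= liftS_eq.
  by have := h (inl u); rewrite /= (negbTE ne) liftS_eq.
case: u => [u|[]] /=; last 2 first.
- exact: hpv'.
- by rewrite liftS_eq.
by case: (u == z); [exact: hsz | rewrite liftS_eq].
Qed.

Lemma freeS_new b i : (i < 3)%N ->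
  free G' (ch (inr b) i) = (sz != ch (inr b) i) && (pv' != ch (inr b) i).
Proof.
move=> hi; apply/freeP/andP => [h|[h1 h2]].
  by split; [have := h (inl z); rewrite /= eqxx | exact: h (nv' V)].
case=> [u|[]] /=; last 2 first.
- exact: h2.
- by rewrite liftS_chF.
by case: (u == z) => //; rewrite liftS_chF.
Qed.

Lemma restr_padmS r a : padm G' r a -> slot_mom r a sz = mj a (nv V) -> padm G r (restr a).
Proof.
case=> h1 h2 h3 hz; split.
- by move=> v; rewrite /mj /mS /mk ffunE; apply: h1.
- move=> v; case: (eqVneq v z) => [->|ne].
    have := h2 (nv V); rewrite /= slot_mom_lift => <-.
    by have := h2 (inl z); rewrite /= eqxx hz /mom_end /mj ffunE.
  by rewrite -slot_mom_lift; have := h2 (inl v); rewrite /= (negbTE ne) /mom_end /mj ffunE.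
- by move=> v; rewrite !ffunE; apply: h3.
Qed.

End MKSome.

Lemma prop_S P (a b : nat * nat * nat) : prop_holds P a b -> a.1.1 = b.1.1.
Proof. by case: a b => [[? ?] ?] [[? ?] ?] /= []. Qed.

Definition me3 (t : nat * nat * nat) (e : nat) : nat :=
  match e with 1 => t.1.2 | 2 => t.1.1 - t.1.2 | 3 => t.2 | _ => t.1.1 - t.2 end.

Lemma mom_endE (W : finType) (x : att W) v e : mom_end x v e = me3 (x v) e.
Proof. by case: e => [|[|[|[|e]]]]. Qed.

Lemma leadingP P js : leading P js -> all (fun ab => bij P ab.1 == ab.2) js.
Proof. by move=> h; apply/allP => -[a b] /h /= ->. Qed.

Lemma IIIs_lead P ab cc (t t' : nat * nat * nat) :
  leading P (joinsIIIs ab cc) -> prop_holds P t t' -> t.1.2 = me3 t' (cA cc + 2).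
Proof.
move/leadingP; case: t t' => [[s j] k] [[s' j'] k'].
by case: P; case: ab; case: cc => //= _ [e1 [e2 e3]]; lia.
Qed.

Section CaseIIs.
Variables (V : finType) (G : gdata V) (z : V) (sw : bool) (P : prop8).
Hypothesis gG : Good G.
Let G' := insIIs G z sw P.

Lemma IIs_free_lift s : free G' (liftS s) = free G s.
Proof. by apply: freeS_lift => t; slsimp2. Qed.

Lemma IIs_free_new b i : (i < 3)%N -> free G' (ch (inr b) i) = (i != 0%N).
Proof.
move=> hi; rewrite /G' /insIIs freeS_new //; try by move=> t; slsimp2.
by slsimp2; case: b => /=; rewrite ?andbT eq_sym.
Qed.

Lemma IIs_dash_lift s : dash G' (liftS s) = liftS (dash G s).
Proof. by rewrite /G' /insIIs mk_dash_lift //=; slsimp2. Qed.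

Lemma IIs_good : Good G'.
Proof.
move=> t; case: (slot_split t) => [[s ->]|[b [i [hi ->]]]].
  rewrite IIs_free_lift => fs; have [f1 f2 f3] := gG fs.
  by rewrite !IIs_dash_lift IIs_free_lift f1 f2 liftS_eq.
rewrite IIs_free_new // => hf.
have hf' b' j : (j < 3)%N -> j != 0%N -> free G' (ch (inr b') j) by move=> hj; rewrite IIs_free_new.
move: hf'; rewrite /G' /insIIs /=; clear G'.
case: (i3_cases hi) => [e|[e|e]]; subst i => // hf'; case: b hf'; case: sw => hf'; rewrite /sig /=; slsimp2.
all: by split => //; apply: hf'.
Qed.

Lemma IIs_inj : Inj G -> Inj G'.
Proof.
move=> [l0 [fl0 hinj]].
have jv r (a : att (V + bool)%type) : padm G' r a -> mj a (nv V) = slot_mom r (restr a) (par G z).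
  by case=> _ h _; rewrite -slot_mom_lift -(h (nv V)).
have rp r a : padm G' r a -> padm G r (restr a).
  move=> ha; apply: (restr_padmS ha).
  case: ha => hb h2 h3; have := h2 (nv' V); have := h3 (nv V).
  rewrite /G' /insIIs /= inordK // => /prop_S.
  case: (hb (nv V)); rewrite /mom_end /mj /mS /nv' /nv /=; lia.
exists (liftS l0); rewrite IIs_free_lift IIs_dash_lift; split=> // r a b ha hb hag.
have e0 : restr a = restr b.
  apply: (hinj r _ _ (rp _ _ ha) (rp _ _ hb)) => s fs n0 n1.
  rewrite -!slot_mom_lift; apply: hag; first by rewrite IIs_free_lift.
    by rewrite liftS_eq.
  by rewrite liftS_eq.
have h1 := hag _ (ltac:(by rewrite IIs_free_new) : free G' (ch (nv V) 1)) ltac:(by slsimp2) ltac:(by slsimp2).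
have h2 := hag _ (ltac:(by rewrite IIs_free_new) : free G' (ch (nv V) 2)) ltac:(by slsimp2) ltac:(by slsimp2).
rewrite !slot_mom_ch //= in h1 h2.
have h0 : mj a (nv V) = mj b (nv V) by rewrite (jv _ _ ha) (jv _ _ hb) e0.
rewrite /G' /insIIs /= in ha hb; apply: (mk_final ha hb e0).
case: ha => [/(_ (nv V)) [ba1 ba2] _ _]; case: hb => [/(_ (nv V)) [bb1 bb2] _ _].
move: h0 h1 h2 ba1 ba2 bb1 bb2; rewrite /mj /mk /mS.
case: (a (nv V)) => [[sa ja] ka]; case: (b (nv V)) => [[sb jb] kb] /= *.
apply: tripleE => /=; lia.
Qed.

End CaseIIs.

Section CaseIIIs.
Variables (V : finType) (G : gdata V) (z : V) (ab cc : bool) (P : prop8).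
Hypothesis gG : Good G.
Hypothesis hl : leading P (joinsIIIs ab cc).
Let G' := insIIIs G z ab cc P.

Lemma IIIs_free_lift s : free G' (liftS s) = free G s.
Proof. by apply: freeS_lift => t; slsimp2. Qed.

Lemma IIIs_free_new b i : (i < 3)%N ->
  free G' (ch (inr b) i) = ~~ (b && (i == cA cc)) && ~~ (~~ b && (i == cA ab)).
Proof.
move=> hi; rewrite /G' /insIIIs freeS_new //; try by move=> t; slsimp2.
by slsimp2; case: b => /=; rewrite ?andbT ?andbF eq_sym.
Qed.

Lemma IIIs_dash_lift s : dash G' (liftS s) = liftS (dash G s).
Proof. by rewrite /G' /insIIIs mk_dash_lift //=; slsimp2. Qed.

Lemma IIIs_good : Good G'.
Proof.
move=> t; case: (slot_split t) => [[s ->]|[b [i [hi ->]]]].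
  rewrite IIIs_free_lift => fs; have [f1 f2 f3] := gG fs.
  by rewrite !IIIs_dash_lift IIIs_free_lift f1 f2 liftS_eq.
rewrite IIIs_free_new // => hf.
have hf' b' j : (j < 3)%N -> ~~ (b' && (j == cA cc)) && ~~ (~~ b' && (j == cA ab)) ->
  free G' (ch (inr b') j) by move=> hj; rewrite IIIs_free_new.
move: hf hf'; rewrite /G' /insIIIs /=; clear G' hl.
case: (i3_cases hi) => [e|[e|e]]; subst i => //; case: b; case: ab; case: cc;
  rewrite /cA /cB /= => // _ hf'; slsimp2.
all: by split => //; apply: hf'.
Qed.

Lemma IIIs_inj : Inj G -> Inj G'.
Proof.
move=> [l0 [fl0 hinj]].
have jv r (a : att (V + bool)%type) : padm G' r a -> mj a (nv V) = slot_mom r (restr a) (par G z).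
  by case=> _ h _; rewrite -slot_mom_lift -(h (nv V)).
have rp r a : padm G' r a -> padm G r (restr a).
  move=> ha; apply: (restr_padmS ha).
  case: ha => hb h2 h3; have := h3 (nv V).
  rewrite /G' /insIIIs /= => /(IIIs_lead hl).
  by rewrite /ch /= inordK // mom_endE /mj => ->.
have fr0 : free G' (ch (nv V) 0) by rewrite IIIs_free_new //= c0A.
have frB : free G' (ch (nv V) (cB ab)) by rewrite IIIs_free_new //= cBA.
exists (liftS l0); rewrite IIIs_free_lift IIIs_dash_lift; split=> // r a b ha hb hag.
have e0 : restr a = restr b.
  apply: (hinj r _ _ (rp _ _ ha) (rp _ _ hb)) => s fs n0 n1.
  rewrite -!slot_mom_lift; apply: hag; first by rewrite IIIs_free_lift.
    by rewrite liftS_eq.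
  by rewrite liftS_eq.
have h1 := hag _ fr0 ltac:(by slsimp2) ltac:(by slsimp2).
have h2 := hag _ frB ltac:(by slsimp2) ltac:(by slsimp2).
rewrite !slot_mom_ch //= in h1 h2.
have h0 : mj a (nv V) = mj b (nv V) by rewrite (jv _ _ ha) (jv _ _ hb) e0.
rewrite /G' /insIIIs /= in ha hb; apply: (mk_final ha hb e0).
case: ha => [/(_ (nv V)) [ba1 ba2] _ _]; case: hb => [/(_ (nv V)) [bb1 bb2] _ _].
move: h0 h1 h2 ba1 ba2 bb1 bb2; case: (ab); rewrite /cB /= /mj /mk /mS;
case: (a (nv V)) => [[sa ja] ka]; case: (b (nv V)) => [[sb jb] kb] /= *;
apply: tripleE => /=; lia.
Qed.

End CaseIIIs.

Lemma melonic_good_inj (V : finType) (G : gdata V) : melonic G -> Good G /\ Inj G.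
Proof.
elim=> {V G}.
- by split; [exact: triv_good | exact: triv_inj].
- move=> V G l o sw P _ [g i] fl _; split; [exact: I_good | exact: I_inj].
- move=> V G l o sw P _ [g i] fl _; split; [exact: II_good | exact: II_inj].
- move=> V G l o ab cb P _ [g i] fl _; split; [exact: III_good | exact: III_inj].
- move=> V G z sw P _ [g i] _; split; [exact: IIs_good | exact: IIs_inj].
- move=> V G z ab cc P _ [g i] hl; split; [exact: IIIs_good | exact: IIIs_inj].
- move=> V W G H f _ [g i] iso; split; [exact: iso_good iso g | exact: iso_inj iso i].
Qed.


Section Count.
Variables (V : finType) (G : gdata V).
Hypothesis hw : wf G.

Lemma wf_dash s : free G s ->
  [/\ free G (dash G s), slot_ty G (dash G s) = ~~ slot_ty G s & dash G (dash G s) = s].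
Proof. by case: hw => _ _ _ h _; apply: h. Qed.

Lemma leaf_anti_pred j :
  is_antileaf G (dash G j) && (dash G (dash G j) == j) = is_leaf G j.
Proof.
rewrite /is_antileaf /is_leaf.
case fj: (free G j).
  have [f1 f2 f3] := wf_dash fj.
  by rewrite f1 f2 f3 eqxx negbK andbT.
rewrite /=; case fd: (free G (dash G j)) => //=.
case: (eqVneq (dash G (dash G j)) j) => [e|]; last by rewrite andbF.
by have [f1 _ _] := wf_dash fd; rewrite e fj in f1.
Qed.

Lemma anti_leaf_sum (F : slot V -> nat) :
  (\sum_(s | is_antileaf G s) F s = \sum_(s | is_leaf G s) F (dash G s))%N.
Proof.
rewrite (reindex_onto (dash G) (dash G)); last first.
  by move=> i /andP [fi _]; have [_ _ ->] := wf_dash fi.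
by apply: eq_bigl => j; rewrite leaf_anti_pred.
Qed.

Lemma free_notin s : free G s = (s \notin [set par G v | v in V]).
Proof.
apply/freeP/idP => [h|h v].
  by apply/imsetP => -[v _ e]; have := h v; rewrite e eqxx.
by apply/eqP => e; move/imsetP: h; apply; exists v.
Qed.

Lemma card_leaf : (#|[pred s | is_leaf G s]| <= #|V|.+1)%N.
Proof.
have pinj : injective (par G) by case: hw.
have h1 : (#|[pred s | free G s]| + #|V| = 2 + 3 * #|V|)%N.
  have -> : #|[pred s | free G s]| = #|~: [set par G v | v in V]|.
    by apply: eq_card => s; rewrite !inE free_notin.
  have -> : (2 + 3 * #|V| = #|{: slot V}|)%N.
    by rewrite card_sum card_prod card_bool card_ord mulnC.
  by rewrite -(cardsC [set par G v | v in V]) card_imset // addnC.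
have h2 : (#|[pred s | free G s]| = #|[pred s | is_leaf G s]| + #|[pred s | is_antileaf G s]|)%N.
  rewrite -!sum1_card (bigID (fun s => slot_ty G s)) /=.
  by congr (_ + _)%N; apply: eq_bigl => s; rewrite !inE.
have h3 : #|[pred s | is_antileaf G s]| = #|[pred s | is_leaf G s]|.
  by rewrite -!sum1_card; have := anti_leaf_sum (fun _ => 1%N).
lia.
Qed.

Lemma leaf_sum_ge r x : admissible G r x ->
  (r <= \sum_(s | is_leaf G s) slot_mom r x s)%N.
Proof.
case=> hb hpar hleaf _.
have pinj : injective (par G) by case: hw.
set F := slot_mom r x.
have e1 : (\sum_s F s = r + r + \sum_(v : V) \sum_(c : 'I_3) mom_end x v (val c + 2))%N.
  rewrite big_sumType /= big_bool /= pair_big /=.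
  by congr (_ + _)%N; apply: eq_bigr => -[v c].
have e2 : (\sum_s F s = \sum_(s | free G s) F s + \sum_(v : V) mj x v)%N.
  rewrite (bigID (fun s => free G s)) /=; congr (_ + _)%N.
  rewrite (eq_bigl (fun s => s \in [set par G v | v in V])); last first.
    by move=> s; rewrite free_notin negbK.
  rewrite big_imset /=; last by move=> u v _ _; apply: pinj.
  by apply: eq_bigr => v _; rewrite /F -hpar.
have e3 : (\sum_(v : V) mj x v <= \sum_(v : V) \sum_(c : 'I_3) mom_end x v (val c + 2))%N.
  apply: leq_sum => v _; rewrite !big_ord_recl big_ord0 /=.
  have := hb v; rewrite /bump /=; lia.
have e4 : (\sum_(s | free G s) F s = \sum_(s | is_leaf G s) F s + \sum_(s | is_antileaf G s) F s)%N.
  by rewrite (bigID (fun s => slot_ty G s)).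
have e5 : (\sum_(s | is_antileaf G s) F s = \sum_(s | is_leaf G s) F s)%N.
  rewrite anti_leaf_sum; apply: eq_bigr => s ls; rewrite /F -hleaf //.
lia.
Qed.

End Count.


Local Open Scope ring_scope.

Lemma geom_le (R : realFieldType) (q : R) M : 0 <= q < 1 ->
  \sum_(m < M) q ^+ m <= (1 - q)^-1.
Proof.
case/andP => q0 q1.
have nz : 1 - q != 0 by rewrite subr_eq0 eq_sym lt_eqF.
have hs : (1 - q) * \sum_(m < M) q ^+ m = 1 - q ^+ M.
  by rewrite -[1 - q]opprB mulNr -subrX1 opprB.
rewrite -[X in X <= _](mulKf nz) hs ler_piMr //.
  by rewrite invr_ge0 subr_ge0 ltW.
by rewrite gerBl exprn_ge0.
Qed.

Lemma box_bound (R : realFieldType) (T : finType) (D : pred T) (q : R)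
    (t : seq {ffun T -> nat}) :
  0 <= q < 1 -> uniq t -> (forall v, v \in t -> forall u, ~~ D u -> v u = 0%N) ->
  \sum_(v <- t) \prod_(u | D u) q ^+ (v u) <= ((1 - q)^-1) ^+ #|D|.
Proof.
move=> hq ut hv; have /andP [q0 q1] := hq.
set M := (\max_(v <- t) \max_u v u).+1.
have hM v u : v \in t -> (v u < M)%N.
  move=> vt; rewrite ltnS; apply: leq_trans (leq_bigmax_seq _ vt isT).
  exact: (leq_bigmax u).
pose iota (v : {ffun T -> nat}) : {ffun T -> 'I_M} := [ffun u => inord (v u)].
have iv v u : v \in t -> val (iota v u) = v u by move=> vt; rewrite ffunE /= inordK // hM.
pose f u (m : 'I_M) : R := if D u then q ^+ m else (m == 0 :> nat)%:R.
have f0 u m : 0 <= f u m by rewrite /f; case: (D u); rewrite ?exprn_ge0 ?ler0n.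
pose F (w : {ffun T -> 'I_M}) := \prod_u f u (w u).
have e1 : \sum_(v <- t) \prod_(u | D u) q ^+ (v u) = \sum_(w <- map iota t) F w.
  rewrite big_map; apply: eq_big_seq => v vt; rewrite big_mkcond; apply: eq_bigr => u _.
  rewrite /f iv //; case: ifP => // /negbT nd.
  by rewrite hv.
have u2 : uniq (map iota t).
  rewrite map_inj_in_uniq // => v v' vt v't e; apply/ffunP => u.
  by rewrite -(iv v u vt) -(iv v' u v't) e.
rewrite e1 big_uniq //.
apply: (@le_trans _ _ (\sum_w F w)).
  rewrite [X in _ <= X](bigID (fun w => w \in map iota t)) /= lerDl.
  by apply: sumr_ge0 => w _; apply: prodr_ge0 => u _.
rewrite /F -bigA_distr_bigA /= -prodr_const [X in _ <= X]big_mkcond /=.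
apply: ler_prod => u _; rewrite sumr_ge0 //=.
rewrite /f -[D u]/(u \in D); case: (u \in D).
  exact: geom_le.
by rewrite big_ord_recl /= big1 ?addr0.
Qed.


Local Open Scope ring_scope.

Section Main.
Variables (R : realType) (p : R) (V : finType) (G : gdata V) (r : nat).
Hypothesis hp : 0 < p < 1.
Hypothesis hw : wf G.
Hypothesis hm : melonic G.

Let q := p `^ 2^-1.

Lemma q_facts : [/\ 0 <= q, q < 1, q ^+ 2 = p & p `^ (r%:R / 2) = q ^+ r].
Proof.
case/andP: hp => p0 p1.
have q0 : 0 <= q by apply: powR_ge0.
have q2 : q ^+ 2 = p.
  by rewrite /q -powR_mulrn // -powRrM mulVf ?pnatr_eq0 // powRr1 // ltW.
split => //.
  rewrite ltNge; apply/negP => h; have := exprn_ege1 2 h.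
  by rewrite q2 leNgt p1.
by rewrite /q -powR_mulrn // -powRrM mulrC.
Qed.

Lemma main_bound : (amplitude p G r <= ((4 : R) ^+ #|V| * p `^ (r%:R / 2))%:E)%E.
Proof.
have [q0 q1 q2 pr] := q_facts.
case/andP: hp => p0 p1.
have [_ [l0 [fl0 hinj]]] := melonic_good_inj hm.
have [fd tyd dd] := wf_dash hw fl0.
pose lam := if slot_ty G l0 then l0 else dash G l0.
have llam : is_leaf G lam.
  by rewrite /lam /is_leaf; case: ifP => h; rewrite ?fl0 ?fd ?tyd ?h.
have lamE : (lam == l0) || (lam == dash G l0).
  by rewrite /lam; case: ifP; rewrite eqxx ?orbT.
have dlamE : (dash G lam == l0) || (dash G lam == dash G l0).
  by rewrite /lam; case: ifP; rewrite ?dd eqxx ?orbT.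
pose D := [pred s | is_leaf G s && (s != lam)].
have cD : (#|D| <= #|V|)%N.
  have := card_leaf hw; rewrite (cardD1x llam).
  have -> : #|[pred i | is_leaf G i & i != lam]| = #|D| by apply: eq_card.
  by rewrite add1n ltnS.
pose phi (x : att V) : {ffun slot V -> nat} :=
  [ffun s => if D s then slot_mom r x s else 0%N].
have inj x y : admissible G r x -> admissible G r y -> phi x = phi y -> x = y.
  move=> ax ay e; have [b1 b2 b3 b4] := ax; have [c1 c2 c3 c4] := ay.
  apply: (hinj r x y) => //= s fs n0 n1.
  have hD t : D t -> slot_mom r x t = slot_mom r y t.
    by move=> Dt; have := congr1 (fun f : {ffun slot V -> nat} => f t) e; rewrite !ffunE Dt.
  case ts: (slot_ty G s).
    apply: hD; rewrite /D /= /is_leaf fs ts /=.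
    by apply: contraNneq n0 => e1; case/orP: lamE => /eqP e2; rewrite e1 e2 ?eqxx // in n1 *.
  have [f1 f2 f3] := wf_dash hw fs.
  have lt : is_leaf G (dash G s) by rewrite /is_leaf f1 f2 ts.
  have ex : slot_mom r x s = slot_mom r x (dash G s) by rewrite (b3 _ lt) f3.
  have ey : slot_mom r y s = slot_mom r y (dash G s) by rewrite (c3 _ lt) f3.
  rewrite ex ey; apply: hD; rewrite /D /= lt /=.
  apply/eqP => e1; case/orP: dlamE; rewrite -e1 f3 => /eqP e2.
    by rewrite e2 eqxx in n0.
  by rewrite e2 eqxx in n1.
have wt x : admissible G r x -> weight p G r x <= q ^+ r * \prod_(u | D u) q ^+ (phi x u).
  move=> ax; rewrite /weight prodrXr prodrXr -exprD -q2 -exprM.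
  apply: ler_wiXn2l => //; first exact: ltW.
  have h1 := leaf_sum_ge hw ax.
  have h2 : (\sum_(u | D u) phi x u <= \sum_(s | is_leaf G s) slot_mom r x s)%N.
    rewrite [X in (_ <= X)%N](bigID (fun s => s != lam)) /=.
    apply: leq_trans (leq_addr _ _); rewrite leq_eqVlt; apply/orP; left; apply/eqP.
    by apply: eq_bigr => u Du; rewrite ffunE; case: ifP => // /negP []; exact: Du.
  lia.
have eb : (\esum_(x in [set x : att V | admissible G r x]) (weight p G r x)%:E
            <= (q ^+ r * ((1 - q)^-1) ^+ #|D|)%:E)%E.
  apply: ge_ereal_sup => _ [A [finA sub] <-].
  rewrite fsbig_finite //= sumEFin lee_fin.
  set s := finmap.enum_fset _.
  have sA x : x \in s -> admissible G r x.
    by move=> xs; apply: sub; apply/set_mem; rewrite -(in_fset_set finA x); exact: xs.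
  apply: (@le_trans _ _ (\sum_(x <- s) q ^+ r * \prod_(u | D u) q ^+ (phi x u))).
    by rewrite big_seq_cond [X in _ <= X]big_seq_cond; apply: ler_sum => x /andP [/sA ax _]; apply: wt.
  rewrite -mulr_sumr ler_wpM2l ?exprn_ge0 //.
  rewrite -(big_map phi xpredT (fun v => \prod_(u | D u) q ^+ (v u))).
  apply: box_bound; first by rewrite q0 q1.
    rewrite map_inj_in_uniq ?finmap.fset_uniq // => x y xs ys; apply: inj; exact: sA.
  by move=> v /mapP [x _ ->] u Du; rewrite ffunE (negbTE Du).
rewrite /amplitude.
have c0 : 0 <= ((1 - p)^-1) ^- #|V| by rewrite exprVn invrK exprn_ge0 // subr_ge0 ltW.
apply: le_trans (lee_wpmul2l _ eb) _; first by rewrite lee_fin.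
rewrite -EFinM lee_fin exprVn invrK pr mulrCA mulrC ler_wpM2r ?exprn_ge0 //.
have pq : 1 - p = (1 - q) * (1 + q) by rewrite -q2 mulrDr mulr1 mulrBl mul1r addrA subrK.
have qn : 1 - q != 0 by rewrite subr_eq0 eq_sym lt_eqF.
have q10 : 0 < 1 - q by rewrite subr_gt0.
apply: (@le_trans _ _ ((1 - p) ^+ #|D| * (1 - q)^-1 ^+ #|D|)).
  apply: ler_wpM2r; first by rewrite exprn_ge0 // invr_ge0 ltW.
  have h0 : 0 <= 1 - p by rewrite subr_ge0 ltW.
  have h1 : 1 - p <= 1 by rewrite gerBl ltW.
  exact: (ler_wiXn2l h0 h1 cD).
rewrite -exprMn pq mulrAC mulfV // mul1r.
apply: (@le_trans _ _ (2 ^+ #|D|)).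
  apply: lerXn2r; rewrite ?nnegrE ?addr_ge0 ?ler0n //. by rewrite -[2]/(1 + 1) lerD2l ltW.
apply: (@le_trans _ _ (2 ^+ #|V|)).
  by apply: ler_weXn2l; rewrite ?ler1n.
apply: lerXn2r; rewrite ?nnegrE ?ler0n //.
by rewrite ler_nat.
Qed.

End Main.


Local Open Scope ring_scope.

Theorem lemma8 (R : realType) (p : R) (r n : nat) (G : gdata 'I_n) :
  0 < p < 1 -> ~~ odd n -> wf G -> heap G -> melonic G ->
  (amplitude p G r <= ((4 : R) ^+ n * p `^ (r%:R / 2))%:E)%E.
Proof.
move=> hp _ hw _ hm; have := main_bound r hp hw hm.
by rewrite card_ord.
Qed.
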